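(* Let $w_r \ge w_c \ge 2$ be integers and let $H_{\mathrm{reg}}$ be the bipartite graph constructed from $(w_c,w_r)$ as described in the context. Then the girth of $H_{\mathrm{reg}}$ is $8$, and the binary linear code whose parity-check matrix is the check-node-by-variable-node incidence matrix of $H_{\mathrm{reg}}$ has minimum distance $d_{\min} = 2^{w_c}$.
   Context: The graph $H_{\mathrm{reg}}$ is a bipartite graph between ''variable nodes'' and ''check nodes'', built as follows from integers $w_r \ge w_c \ge 2$. (1) Base tree $H_{\mathrm{base}}$: a root check node is adjacent to $w_r$ variable nodes $v_{1,0},\dots,v_{w_r,0}$. Each $v_{i,0}$ has $w_c-1$ further (child) check nodes, and each of these child check nodes has $w_r-1$ further (child) variable nodes. The $(w_c-1)(w_r-1)$ variable nodes below $v_{i,0}$ are labelled $v_{i,1},\dots,v_{i,(w_c-1)(w_r-1)}$, where for $k=1,\dots,w_c-1$ the nodes $v_{i,(k-1)(w_r-1)+1},\dots,v_{i,k(w_r-1)}$ are the children of the $k$-th child check node of $v_{i,0}$. These nodes $v_{i,j}$ with $j\ge 1$ are called last-layer variable nodes. (2) For each $j=1,\dots,(w_c-1)(w_r-1)$ add a new check node $c_j$ adjacent to $v_{1,j},v_{2,j},\dots,v_{w_r,j}$. Call the resulting graph $G_0$. (3) If $w_c \ge 3$, for $s=1,\dots,w_c-2$: let $G_s$ consist of $w_r$ disjoint copies of $G_{s-1}$, together with, for every last-layer variable node $u$ of $G_{s-1}$ (i.e. every variable node of $G_{s-1}$ coming from a last-layer variable node of some copy of $H_{\mathrm{base}}$),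 one new check node adjacent to the $w_r$ copies of $u$. Finally $H_{\mathrm{reg}} = G_{w_c-2}$. The girth of a graph is the length of its shortest cycle. The code associated with $H_{\mathrm{reg}}$ is the set of binary vectors indexed by variable nodes whose support meets every check node's neighbourhood in an even number of vertices; $d_{\min}$ is the minimum Hamming weight of a nonzero codeword. *)

(* Defs.v *)
From mathcomp Require Import all_boot.
Set Implicit Arguments. Unset Strict Implicit. Unset Printing Implicit Defensive.

(* Indices are 0-based:
   - variable v_{i,j} of H_base is (i, j) with i : 'I_wr, j : 'I_(L+1),
     L = (wc-1)(wr-1); j = 0 is v_{i,0}, j >= 1 last-layer.
   - checks of H_base: root (inl (inl tt)); the k-th child check of v_{i,0}
     (inl (inr (i,k))), k : 'I_(wc-1) (0-based block index);
   - the added checks c_j of G_0: inr n, n : 'I_L, standing for c_{n+1}.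
   - G_{s+1}: variables 'I_wr * V(G_s) (copy x of variable u); checks are
     copies (inl (x, c)) of checks of G_s, and one new check (inr u) for every
     last-layer variable u of G_s, adjacent to the wr copies of u. *)

Definition Lsz (wc wr : nat) : nat := (wc.-1 * wr.-1)%N.

Fixpoint Vt (wc wr : nat) (s : nat) : finType :=
  match s with
  | 0 => ('I_wr * 'I_(Lsz wc wr).+1)%type
  | s'.+1 => ('I_wr * Vt wc wr s')%type
  end.

Fixpoint lastv (wc wr : nat) (s : nat) : Vt wc wr s -> bool :=
  match s return Vt wc wr s -> bool with
  | 0 => fun u => (u.2 != ord0)
  | s'.+1 => fun u => lastv u.2
  end.

Definition Cbase (wc wr : nat) : finType :=
  (unit + ('I_wr * 'I_wc.-1) + 'I_(Lsz wc wr))%type.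

Fixpoint Ct (wc wr : nat) (s : nat) : finType :=
  match s with
  | 0 => Cbase wc wr
  | s'.+1 => ('I_wr * Ct wc wr s' + {u : Vt wc wr s' | lastv u})%type
  end.

Definition adj0 (wc wr : nat) (c : Cbase wc wr) (v : Vt wc wr 0) : bool :=
  match c with
  | inl (inl tt) => (v.2 == 0 :> nat)
  | inl (inr (i, k)) =>
      (v.1 == i) && ((v.2 == 0 :> nat) || ((v.2.-1 %/ wr.-1)%N == k :> nat))
  | inr n => (v.2 == n.+1 :> nat)
  end.

Fixpoint adj (wc wr : nat) (s : nat) : Ct wc wr s -> Vt wc wr s -> bool :=
  match s return Ct wc wr s -> Vt wc wr s -> bool with
  | 0 => fun c v => adj0 c v
  | s'.+1 => fun c v =>
      match c with
      | inl (x, c') => (v.1 == x) && adj c' v.2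
      | inr u => (sval u == v.2)
      end
  end.

Definition Hvar (wc wr : nat) : finType := Vt wc wr (wc - 2).
Definition Hchk (wc wr : nat) : finType := Ct wc wr (wc - 2).
Definition Hadj (wc wr : nat) : Hchk wc wr -> Hvar wc wr -> bool :=
  @adj wc wr (wc - 2).

Definition Hnode (wc wr : nat) : finType := (Hvar wc wr + Hchk wc wr)%type.
Definition Hedge (wc wr : nat) : rel (Hnode wc wr) :=
  fun a b => match a, b with
             | inl v, inr c => Hadj c v
             | inr c, inl v => Hadj c v
             | _, _ => false
             end.

Definition is_cycle (T : eqType) (e : rel T) (p : seq T) : bool :=
  [&& 3 <= size p, uniq p & cycle e p].

Definition girth_is (T : eqType) (e : rel T) (g : nat) : Prop :=
  (exists p, is_cycle e p /\ size p = g) /\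
  (forall p, is_cycle e p -> g <= size p).

Definition is_codeword (V C : finType) (a : C -> V -> bool) (S : {set V}) : Prop :=
  forall c : C, ~~ odd #|[set v in S | a c v]|.

Definition dmin_is (V C : finType) (a : C -> V -> bool) (d : nat) : Prop :=
  (exists S : {set V}, is_codeword a S /\ S != set0 /\ #|S| = d) /\
  (forall S : {set V}, is_codeword a S -> S != set0 -> d <= #|S|).

(* Main.v *)
Require Import Defs.
From mathcomp Require Import all_boot zify.
Set Implicit Arguments. Unset Strict Implicit. Unset Printing Implicit Defensive.

Lemma oeq n (a b : 'I_n) : (a == b) = (a == b :> nat). Proof. by []. Qed.
Lemma inl_eq (A B : eqType) (a b : A) : (inl a == inl b :> A + B) = (a == b). Proof. by []. Qed.
Lemma inr_eq (A B : eqType) (a b : B) : (inr a == inr b :> A + B) = (a == b). Proof. by []. Qed.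
Lemma inlr (A B : eqType) (a : A) (b : B) : (inl a == inr b :> A + B) = false. Proof. by []. Qed.
Lemma inrl (A B : eqType) (a : A) (b : B) : (inr b == inl a :> A + B) = false. Proof. by []. Qed.
Ltac genblk := repeat match goal with |- context [?j.-1 %/ ?w] => generalize (j.-1 %/ w); intro end.
Ltac norm := repeat match goal with
  | H : is_true (_ && _) |- _ => let H1 := fresh "h" in let H2 := fresh "h" in move/andP: H => [H1 H2]
  | H : is_true (~~ (_ && _)) |- _ => rewrite negb_and in H
  | H : is_true (~~ (_ || _)) |- _ => rewrite negb_or in H
  | H : is_true (_ == _) |- _ => move/eqP: H => H
  | H : is_true (~~ (_ == _)) |- _ => move/eqP: H => H
  end.
Ltac solve_or := first [ congruence | match goal with H : is_true (_ || _) |- _ => case/orP: H => H; norm; solve_or end ].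
Ltac splitb := repeat match goal with
  | H : is_true (_ && _) |- _ => let H1 := fresh "h" in let H2 := fresh "h" in move/andP: H => [H1 H2]
  end.

Definition bedge (V C : finType) (a : C -> V -> bool) : rel (V + C) :=
  fun x y => match x, y with
             | inl v, inr c => a c v
             | inr c, inl v => a c v
             | _, _ => false end.

Definition no4 (V C : finType) (a : C -> V -> bool) :=
  forall c c' v v', c != c' -> v != v' -> a c v -> a c v' -> a c' v -> a c' v' -> False.
Definition no6 (V C : finType) (a : C -> V -> bool) :=
  forall c1 c2 c3 v1 v2 v3, c1 != c2 -> c2 != c3 -> c1 != c3 -> v1 != v2 -> v2 != v3 -> v1 != v3 ->
    a c1 v1 -> a c1 v2 -> a c2 v2 -> a c2 v3 -> a c3 v3 -> a c3 v1 -> False.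

Lemma girth_ge8 (V C : finType) (a : C -> V -> bool) : no4 a -> no6 a ->
  forall p, is_cycle (bedge a) p -> 8 <= size p.
Proof.
move=> h4 h6 [|[x1|x1] [|[x2|x2] [|[x3|x3] [|[x4|x4] [|[x5|x5] [|[x6|x6] [|[x7|x7] [|x8 p]]]]]]]] //; rewrite /is_cycle /bedge /=;
  rewrite /= ?inE /= ?negb_or //= => H; splitb; try done.
all: repeat match goal with H : is_true (~~ (inl _ == inl _)) |- _ => move: H; rewrite /= => H | H : is_true (~~ (inr _ == inr _)) |- _ => move: H; rewrite /= => H end.
- exfalso; exact: (h4 x2 x4 x1 x3).
- exfalso; exact: (h6 x2 x4 x6 x1 x3 x5).
- exfalso; exact: (h4 x1 x3 x2 x4).
- exfalso; apply: (h6 x3 x5 x1 x2 x4 x6) => //; by rewrite eq_sym.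
Qed.

Lemma no4_0 wc wr : no4 (@adj wc wr 0).
Proof.
move=> c c' [vi vj] [vi' vj'];
case: c => [[[]|[i k]]|n]; case: c' => [[[]|[i' k']]|n'] /=; rewrite ?inl_eq ?inr_eq ?xpair_eqE ?oeq;
genblk; lia.
Qed.


Lemma no6_0 wc wr : no6 (@adj wc wr 0).
Proof.
move=> c1 c2 c3 [vi1 vj1] [vi2 vj2] [vi3 vj3];
case: c1 => [[[]|[i1 k1]]|n1]; case: c2 => [[[]|[i2 k2]]|n2]; case: c3 => [[[]|[i3 k3]]|n3] /=; rewrite ?inl_eq ?inr_eq ?xpair_eqE ?oeq;
genblk; move=> ? ? ? ? ? ? ? ? ? ? ? ?; norm; solve_or.
Qed.

Lemma no4_S wc wr s : no4 (@adj wc wr s) -> no4 (@adj wc wr s.+1).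
Proof.
move=> IH c c' [y v] [y' v'].
case: c => [[x c]|u]; case: c' => [[x' c']|u'] /=; rewrite ?inl_eq ?inr_eq ?xpair_eqE.
- move=> hc hv /andP[/eqP e1 a1] /andP[/eqP e2 a2] /andP[/eqP e3 a3] /andP[/eqP e4 a4]; subst.
  move: hc hv; rewrite !eqxx /= => hc hv; exact: (IH c c' v v').
- move=> _ hv /andP[/eqP e1 _] /andP[/eqP e2 _] /eqP e3 /eqP e4; subst.
  by rewrite !eqxx in hv.
- move=> _ hv /eqP e1 /eqP e2 /andP[/eqP e3 _] /andP[/eqP e4 _]; subst.
  by rewrite !eqxx in hv.
- move=> hc _ /eqP e1 _ /eqP e3 _; subst.
  by move: hc; rewrite -(inj_eq val_inj) /= e3 eqxx.
Qed.

Lemma no6_S wc wr s : no6 (@adj wc wr s) -> no6 (@adj wc wr s.+1).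
Proof.
move=> IH c1 c2 c3 [y1 v1] [y2 v2] [y3 v3].
case: c1 => [[x1 c1]|u1]; case: c2 => [[x2 c2]|u2]; case: c3 => [[x3 c3]|u3] /=;
  rewrite ?inl_eq ?inr_eq ?xpair_eqE.
- move=> h12 h23 h13 g12 g23 g13 /andP[/eqP e1 a1] /andP[/eqP e2 a2] /andP[/eqP e3 a3]
    /andP[/eqP e4 a4] /andP[/eqP e5 a5] /andP[/eqP e6 a6]; subst.
  move: h12 h23 h13 g12 g23 g13; rewrite !eqxx /= => *; exact: (IH c1 c2 c3 v1 v2 v3).
all: rewrite -?(inj_eq val_inj) /= => *; norm; solve_or.
Qed.

Definition cyc8 (V C : finType) (a : C -> V -> bool) :=
  exists v1 v2 v3 v4 c1 c2 c3 c4,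
    uniq [:: v1; v2; v3; v4] && uniq [:: c1; c2; c3; c4] && a c1 v1 && a c1 v2 && a c2 v2 &&
    a c2 v3 && a c3 v3 && a c3 v4 && a c4 v4 && a c4 v1.

Lemma cyc8_0 wc wr : 1 < wc -> 1 < wr -> cyc8 (@adj wc wr 0).
Proof.
move=> hc hr.
have hL : 0 < Lsz wc wr by rewrite /Lsz muln_gt0; lia.
have hk : 0 < wc.-1 by lia.
pose i0 : 'I_wr := Ordinal (ltnW hr).
pose i1 : 'I_wr := Ordinal hr.
pose j0 : 'I_(Lsz wc wr).+1 := ord0.
pose j1 : 'I_(Lsz wc wr).+1 := Ordinal (hL : 1 < (Lsz wc wr).+1).
pose k0 : 'I_(wc.-1) := Ordinal hk.
pose n0 : 'I_(Lsz wc wr) := Ordinal hL.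
exists (i0,j0), (i1,j0), (i1,j1), (i0,j1), (inl (inl tt) : Cbase wc wr),
  (inl (inr (i1,k0)) : Cbase wc wr), (inr n0 : Cbase wc wr), (inl (inr (i0,k0)) : Cbase wc wr).
by rewrite /= div0n.
Qed.

Lemma cyc8_S wc wr s : 1 < wr -> cyc8 (@adj wc wr s) -> cyc8 (@adj wc wr s.+1).
Proof.
move=> hr [v1 [v2 [v3 [v4 [c1 [c2 [c3 [c4 H]]]]]]]].
pose x0 : 'I_wr := Ordinal (ltnW hr).
exists (x0,v1), (x0,v2), (x0,v3), (x0,v4), (inl (x0,c1) : Ct wc wr s.+1), (inl (x0,c2) : Ct wc wr s.+1),
  (inl (x0,c3) : Ct wc wr s.+1), (inl (x0,c4) : Ct wc wr s.+1).
by move: H; rewrite /= !inE !xpair_eqE ?inl_eq !xpair_eqE !eqxx /=.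
Qed.

Lemma even_other (T : finType) (X : {set T}) x : x \in X -> ~~ odd #|X| -> exists2 y, y \in X & y != x.
Proof.
move=> hx; rewrite (cardsD1 x X) hx.
case: (set_0Vmem (X :\ x)) => [->|[y]]; first by rewrite cards0.
by rewrite !inE => /andP[hyx hy] _; exists y.
Qed.

Lemma code_other (V C : finType) (a : C -> V -> bool) S c x :
  is_codeword a S -> x \in S -> a c x -> exists2 y, (y \in S) && a c y & y != x.
Proof.
move=> hS hx hax; have [|y] := @even_other _ [set v in S | a c v] x _ (hS c).
- by rewrite inE hx hax.
- by rewrite inE => hy hyx; exists y.
Qed.

Definition slice wc wr s (S : {set Vt wc wr s.+1}) (x : 'I_wr) : {set Vt wc wr s} :=
  [set v | (x, v) \in S].

Lemma slice_card wc wr s (S : {set Vt wc wr s.+1}) x (P : pred (Vt wc wr s)) :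
  #|[set w in S | (w.1 == x) && P w.2]| = #|[set v in slice S x | P v]|.
Proof.
have -> : [set w in S | (w.1 == x) && P w.2] = setX [set x] [set v in slice S x | P v].
  apply/setP => [[y v]]; rewrite !inE /=.
  by case: eqP => [->|]; rewrite ?andbF.
by rewrite cardsX cards1 mul1n.
Qed.

Lemma slice_code wc wr s (S : {set Vt wc wr s.+1}) x :
  is_codeword (@adj wc wr s.+1) S -> is_codeword (@adj wc wr s) (slice S x).
Proof.
move=> hS c; have := hS (inl (x, c) : Ct wc wr s.+1).
rewrite (_ : [set w in S | adj (inl (x,c) : Ct wc wr s.+1) w] = [set w in S | (w.1 == x) && adj c w.2]) ?slice_card //.
Qed.

Lemma two_slices wc wr s (S : {set Vt wc wr s.+1}) x x' : x != x' ->
  #|slice S x| + #|slice S x'| <= #|S|.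
Proof.
move=> hxx.
have eA : forall z, [set v in slice S z | xpredT v] = slice S z by move=> z; apply/setP=> v; rewrite !inE /= andbT.
rewrite -(eA x) -(eA x') -!slice_card.
set A := [set w in S | _]; set B := [set w in S | _].
have hI : A :&: B = set0.
  apply/setP => w; rewrite !inE andbT andbT.
  case: (w.1 =P x) => [->|]; last by rewrite !andbF.
  by rewrite (negbTE hxx) !andbF.
have := cardsU A B; rewrite hI cards0 subn0 => <-.
by apply: subset_leq_card; apply/subsetP => w; rewrite !inE; case/orP => /andP[].
Qed.

Lemma last0 wc wr : 1 < wc -> forall S, is_codeword (@adj wc wr 0) S -> S != set0 ->
  exists2 u, u \in S & lastv u.
Proof.
move=> hc S hS /set0Pn [[i j] hv].
case: (eqVneq (j : nat) 0) => hj; last by exists (i,j).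
have hk : 0 < wc.-1 by lia.
have [|[i' j'] /andP [hy ha] hne] := code_other (c := inl (inr (i, Ordinal hk)) : Ct wc wr 0) hS hv.
  by rewrite /= eqxx hj.
exists (i',j') => //=.
move: ha hne; rewrite /= xpair_eqE !oeq hj; genblk => h1 h2; change (is_true ((j' : nat) != 0)); lia.
Qed.

Lemma lb0 wc wr : 1 < wc -> 1 < wr -> forall S, is_codeword (@adj wc wr 0) S -> S != set0 ->
  4 <= #|S|.
Proof.
move=> hc hr S hS hne.
have [[i j] hu hl] := last0 hc hS hne.
have hj : 0 < (j : nat) by change (is_true ((j : nat) != 0)) in hl; lia.
have hn : j.-1 < Lsz wc wr by have := ltn_ord j; lia.
have [|[i' j'] /andP[hu' ha'] hne'] := code_other (c := inr (Ordinal hn) : Ct wc wr 0) hS hu.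
  by rewrite /= prednK.
have hb : j.-1 %/ wr.-1 < wc.-1.
  by rewrite ltn_divLR; [exact: hn | lia].
have [|[ia ja] /andP[hua haa] hnea] := code_other (c := inl (inr (i, Ordinal hb)) : Ct wc wr 0) hS hu.
  by rewrite /= !eqxx orbT.
have ej : (j' : nat) = j by move: ha'; rewrite /= prednK // => /eqP.
have [|[ib jb] /andP[hub hab] hneb] := code_other (c := inl (inr (i', Ordinal hb)) : Ct wc wr 0) hS hu'.
  by rewrite /= ej !eqxx orbT.
have hU : uniq [:: (i,j); (i',j'); (ia,ja); (ib,jb)].
  move: ha' hne' haa hnea hab hneb; rewrite /= !inE !xpair_eqE !oeq; genblk; lia.
move/card_uniqP: hU => hcard.
rewrite -[4]/(size [:: (i,j); (i',j'); (ia,ja); (ib,jb)]) -hcard.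
apply: subset_leq_card; apply/subsetP => w; rewrite !inE.
by case/or4P => /eqP ->.
Qed.

Lemma lb wc wr : 1 < wc -> 1 < wr -> forall s (S : {set Vt wc wr s}),
  is_codeword (@adj wc wr s) S -> S != set0 ->
  (exists2 u, u \in S & lastv u) /\ 2 ^ s.+2 <= #|S|.
Proof.
move=> hc hr; elim=> [|s IH] S hS hne.
  by split; [exact: last0 | exact: lb0].
have [[x u] hxu] := set0Pn _ hne.
have hSx := slice_code x hS.
have hnx : slice S x != set0 by apply/set0Pn; exists u; rewrite inE.
have [[u0 hu0 hl0] hcx] := IH _ hSx hnx.
have hxu0 : (x, u0) \in S by move: hu0; rewrite inE.
have [|[x' u'] /andP[hw ha] hne'] :=
  code_other (c := inr (exist _ u0 hl0) : Ct wc wr s.+1) hS hxu0.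
  by rewrite /= eqxx.
move: ha => /= /eqP ea; subst u'.
have hxx : x != x' by move: hne'; rewrite xpair_eqE eqxx andbT eq_sym.
have hnx' : slice S x' != set0 by apply/set0Pn; exists u0; rewrite inE.
have [_ hcx'] := IH _ (slice_code x' hS) hnx'.
split; first by exists (x, u0).
have := two_slices S hxx; rewrite expnS mul2n -addnn; move=> h; apply: leq_trans h; exact: leq_add.
Qed.

Lemma code_X wc wr s (A : {set 'I_wr}) (W : {set Vt wc wr s}) :
  ~~ odd #|A| -> is_codeword (@adj wc wr s) W ->
  is_codeword (@adj wc wr s.+1) (setX A W).
Proof.
move=> hA hW [[x c]|u].
- have -> : [set w in setX A W | adj (inl (x,c) : Ct wc wr s.+1) w] =
            setX [set y in A | y == x] [set v in W | adj c v].
    apply/setP => [[y v]]; rewrite !inE /=.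
    by case: (y \in A); case: (v \in W); case: (y == x).
  by rewrite cardsX oddM (negbTE (hW c)) andbF.
- have -> : [set w in setX A W | adj (inr u : Ct wc wr s.+1) w] =
            setX A [set v in W | sval u == v].
    by apply/setP => [[y v]]; rewrite !inE /= andbA.
  by rewrite cardsX oddM (negbTE hA).
Qed.

Lemma setIdK (T : finType) (B : {set T}) (P : pred T) b :
  {in B, forall j, P j = b} -> [set j in B | P j] = if b then B else set0.
Proof.
move=> h; apply/setP => j; rewrite !inE.
case hj: (j \in B) => /=.
- by rewrite h //; case: b {h}; rewrite ?inE ?hj.
- by case: b {h}; rewrite ?inE ?hj.
Qed.

Lemma ub0_gen wc wr (jB : 'I_(Lsz wc wr).+1) : 1 < wc -> 1 < wr -> (jB : nat) != 1 ->
  (forall k : 'I_wc.-1, ((jB == 0 :> nat) || (jB.-1 %/ wr.-1 == k)) = (k == 0 :> nat)) ->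
  exists W : {set Vt wc wr 0}, is_codeword (@adj wc wr 0) W /\ #|W| = 4.
Proof.
move=> hc hr hB1 hBk.
have hL : 0 < Lsz wc wr by rewrite /Lsz muln_gt0; lia.
pose i0 : 'I_wr := Ordinal (ltnW hr).
pose i1 : 'I_wr := Ordinal hr.
pose jA : 'I_(Lsz wc wr).+1 := Ordinal (hL : 1 < (Lsz wc wr).+1).
have hA : #|[set i0; i1]| = 2 by rewrite cards2.
have hB : #|[set jA; jB]| = 2 by rewrite cards2 oeq eq_sym hB1.
exists (setX [set i0; i1] [set jA; jB]); split; last by rewrite cardsX hA hB.
move=> [[[]|[i k]]|n].
- have -> : [set w in setX [set i0; i1] [set jA; jB] | adj (inl (inl tt) : Ct wc wr 0) w] =
            setX [set i0; i1] [set j in [set jA; jB] | j == 0 :> nat].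
    by apply/setP => [[y v]]; rewrite !inE /= andbA.
  by rewrite cardsX oddM hA.
- have -> : [set w in setX [set i0; i1] [set jA; jB] | adj (inl (inr (i,k)) : Ct wc wr 0) w] =
            setX [set y in [set i0; i1] | y == i]
                 [set j in [set jA; jB] | (j == 0 :> nat) || (j.-1 %/ wr.-1 == k)].
    apply/setP => [[y v]]; rewrite !inE /=.
    by case: (y == i0); case: (y == i1); case: (v == jA); case: (v == jB); case: (y == i).
  rewrite (@setIdK _ [set jA; jB] (fun j : 'I_(Lsz wc wr).+1 => (j == 0 :> nat) || (j.-1 %/ wr.-1 == k)) (k == 0 :> nat)).
    by rewrite cardsX oddM; case: ifP; rewrite ?hB ?cards0 ?andbF.
  move=> j; rewrite !inE => /orP[] /eqP -> //.
  by rewrite /= div0n eq_sym.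
- have -> : [set w in setX [set i0; i1] [set jA; jB] | adj (inr n : Ct wc wr 0) w] =
            setX [set i0; i1] [set j in [set jA; jB] | j == n.+1 :> nat].
    by apply/setP => [[y v]]; rewrite !inE /= andbA.
  by rewrite cardsX oddM hA.
Qed.

Lemma ub0 wc wr : 1 < wc -> wc <= wr ->
  exists W : {set Vt wc wr 0}, is_codeword (@adj wc wr 0) W /\ #|W| = 4.
Proof.
move=> hc hcr.
have hr : 1 < wr by lia.
case: (eqVneq wr 2) => hr2.
- subst wr.
  apply: (@ub0_gen wc 2 ord0) => // k.
  by have := ltn_ord k; rewrite /=; lia.
- have hL : 2 < (Lsz wc wr).+1 by rewrite /Lsz; nia.
  apply: (@ub0_gen wc wr (Ordinal hL)) => // k.
  rewrite /= divn_small; last by lia.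
  by rewrite eq_sym.
Qed.

Lemma ub wc wr : 1 < wc -> wc <= wr -> forall s,
  exists W : {set Vt wc wr s}, is_codeword (@adj wc wr s) W /\ #|W| = 2 ^ s.+2.
Proof.
move=> hc hcr; have hr : 1 < wr by lia.
elim=> [|s [W [hW hcW]]]; first exact: ub0.
pose i0 : 'I_wr := Ordinal (ltnW hr).
pose i1 : 'I_wr := Ordinal hr.
have hA : #|[set i0; i1]| = 2 by rewrite cards2.
exists (setX [set i0; i1] W); split.
  by apply: code_X => //; rewrite hA.
by rewrite cardsX hA hcW expnS.
Qed.

Theorem proposition2 (wc wr : nat) :
  2 <= wc -> wc <= wr ->
  girth_is (@Hedge wc wr) 8 /\ dmin_is (@Hadj wc wr) (2 ^ wc).
Proof.
move=> hc hcr; have hr : 1 < wr by lia.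
have e : 2 ^ wc = 2 ^ (wc - 2).+2 by congr (2 ^ _); lia.
have n4 : forall s, no4 (@adj wc wr s) by elim=> [|s IH]; [exact: no4_0 | exact: no4_S].
have n6 : forall s, no6 (@adj wc wr s) by elim=> [|s IH]; [exact: no6_0 | exact: no6_S].
have c8 : forall s, cyc8 (@adj wc wr s) by elim=> [|s IH]; [exact: cyc8_0 | exact: cyc8_S].
split; first split.
- have [v1 [v2 [v3 [v4 [c1 [c2 [c3 [c4 H]]]]]]]] := c8 (wc - 2).
  exists [:: inl v1; inr c1; inl v2; inr c2; inl v3; inr c3; inl v4; inr c4]; split => //.
  move: H; rewrite /is_cycle /= !inE /= ?inl_eq ?inr_eq ?inlr ?inrl /= => H; splitb.
  by rewrite /Hadj; repeat (apply/andP; split) => //; rewrite ?orbF //.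
- move=> p hp; exact: (girth_ge8 (n4 (wc-2)) (n6 (wc-2)) hp).
rewrite e; split.
- have [W [hW hcW]] := ub hc hcr (wc - 2).
  exists W; split => //; split => //.
  apply/negP => /eqP h0.
  by have := expn_gt0 2 (wc - 2).+2; rewrite -hcW h0 cards0.
- by move=> S hS hne; exact: (proj2 (lb hc hr hS hne)).
Qed.
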